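(* Let $N>2$ be an odd positive integer with smallest prime factor $p$, and let $K\ge N$ be an integer. Let $a_2,a_1\in\mathbb{Z}_N$ with $\gcd(a_2,N)=1$, and let $f:\mathbb{Z}_N\to\mathbb{Z}_K$ be defined by $f(x)=\phi(a_2x^2+a_1x)$, where $\phi:\mathbb{Z}_N\to\mathbb{Z}_K$ sends the class of $y\in\{0,\dots,N-1\}$ to the class of $y$ modulo $K$. For $0\le k<N$ let $\mathbf{a}_k=(a_k(0),\dots,a_k(K-1))$ with $a_k(t)=\omega_K^{tf(k)}$. Let $\mathbf{h}_0,\dots,\mathbf{h}_{N-1}$ be unimodular complex sequences of length $N$ such that for all $0\le i\ne j<N$ and all $0\le v<N$, $$\Big|\sum_{n=0}^{N-1}h_i(n)h_j^*(n)\Big|\le 1,\qquad \Big|\sum_{n=0}^{N-1}h_i(n)h_j^*(n)\omega_N^{nv}\Big|<N.$$ For $0\le i<N$ define $\mathbf{s}_i$ of length $NK$ by $s_i(tN+k)=h_i(k)a_k(t)$ ($0\le t<K$, $0\le k<N$) and let $\mathcal{S}=\{\mathbf{s}_0,\dots,\mathbf{s}_{N-1}\}$. Then $\mathcal{S}$ is an aperiodic $(N,NK,\Pi,K+p-1)$-LAZ sequence set, where (1) $\Pi=(-p,p)\times(-N,N)$ if $K=N$; (2) $\Pi=(-p,p)\times(-K+N-1,K-N+1)$ if $N<K<2N-1$; (3) $\Pi=(-p,p)\times(-K,K)$ if $K\ge 2N-1$.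
   Context: $\omega_L=e^{2\pi\sqrt{-1}/L}$, $z^*$ is complex conjugation, unimodular means all entries have modulus 1. For sequences $\mathbf{a},\mathbf{b}$ of length $L$, the aperiodic cross-ambiguity function is $\hat{AF}_{\mathbf{a},\mathbf{b}}(\tau,v)=\sum_{t=0}^{L-1-\tau}a(t)b^*(t+\tau)\omega_L^{vt}$ for $0\le\tau\le L-1$, $\hat{AF}_{\mathbf{a},\mathbf{b}}(\tau,v)=\sum_{t=-\tau}^{L-1}a(t)b^*(t+\tau)\omega_L^{vt}$ for $-L<\tau<0$, and $0$ for $|\tau|\ge L$; $\hat{AF}_{\mathbf{a}}=\hat{AF}_{\mathbf{a},\mathbf{a}}$. A set of $M$ sequences of length $L$ is an $(M,L,\Pi,\hat\theta)$-LAZ aperiodic sequence set if $|\hat{AF}_{\mathbf{a}}(\tau,v)|\le\hat\theta$ for all sequences $\mathbf{a}$ in the set and all integer $(0,0)\ne(\tau,v)\in\Pi$, and $|\hat{AF}_{\mathbf{a},\mathbf{b}}(\tau,v)|\le\hat\theta$ for all distinct $\mathbf{a},\mathbf{b}$ in the set and all integer $(\tau,v)\in\Pi$. *)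

(* Defs.v *)
From mathcomp Require Import all_boot all_order all_algebra.
From mathcomp Require Import complex.
From mathcomp Require Import reals trigo.

Import Order.TTheory GRing.Theory Num.Theory.
Local Open Scope ring_scope.
Local Open Scope complex_scope.

Definition omega (R : realType) (L : nat) : R[i] :=
  (cos (2 * pi / L%:R))%:C + 'i * (sin (2 * pi / L%:R))%:C.

(* Sequences of length L are functions nat -> R[i]; only the entries
   0 .. L-1 are ever used. *)

Definition aperAF (R : realType) (L : nat) (a b : nat -> R[i]) (tau v : int)
  : R[i] :=
  if (`|tau|%N >= L)%N then 0
  else if (0 <= tau)%R then
    \sum_(0 <= t < L - `|tau|%N) a t * (b (t + `|tau|%N)%N)^* * omega R L ^ (v * t%:Z)
  else
    \sum_(`|tau|%N <= t < L) a t * (b (t - `|tau|%N)%N)^* * omega R L ^ (v * t%:Z).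

Definition LAZ_aperiodic (R : realType) (M L : nat) (s : 'I_M -> nat -> R[i])
  (Pi : int -> int -> Prop) (theta : R) : Prop :=
  (forall (i : 'I_M) (tau v : int), Pi tau v -> (tau, v) != (0%Z, 0%Z) ->
     `|aperAF R L (s i) (s i) tau v| <= theta%:C) /\
  (forall (i j : 'I_M) (tau v : int), i != j -> Pi tau v ->
     `|aperAF R L (s i) (s j) tau v| <= theta%:C).

Definition open_box (A B : int) (tau v : int) : Prop :=
  (- A < tau < A)%R /\ (- B < v < B)%R.

(* The sequence a_k = (omega_K^{t f(k)})_{t<K} with
   f(x) = phi(a2 x^2 + a1 x), phi : Z_N -> Z_K, y mod N |-> y mod K.
   Since 0 <= y < N <= K, the representative of f(k) in {0..K-1} is
   (a2 k^2 + a1 k) mod N. *)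
Definition fquad (N a2 a1 k : nat) : nat := ((a2 * k ^ 2 + a1 * k) %% N)%N.

Definition seq_a (R : realType) (N K a2 a1 k t : nat) : R[i] :=
  omega R K ^+ (t * fquad N a2 a1 k)%N.

Definition seq_s (R : realType) (N K a2 a1 : nat) (h : 'I_N -> nat -> R[i])
  (i : 'I_N) (m : nat) : R[i] :=
  h i (m %% N)%N * seq_a R N K a2 a1 (m %% N)%N (m %/ N)%N.

(* Main.v *)
Require Import Defs.
From mathcomp Require Import all_boot all_order all_algebra.
From mathcomp Require Import complex.
From mathcomp Require Import reals trigo.
From mathcomp Require Import ring lra zify.
Import Order.TTheory GRing.Theory Num.Theory.
Local Open Scope ring_scope.
Local Open Scope complex_scope.

Section Trig.
Variable R : realType.
Definition ee (x : R) : R[i] := (cos x)%:C + 'i * (sin x)%:C.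
Lemma eeD x y : ee (x + y) = ee x * ee y.
Proof. by rewrite /ee cosD sinD; simpc; rewrite [_ * sin y + _]addrC. Qed.
Lemma ee0 : ee 0 = 1.
Proof. by rewrite /ee cos0 sin0; simpc. Qed.
Lemma eeMn n x : ee (n%:R * x) = ee x ^+ n.
Proof.
elim: n => [|n IH]; first by rewrite mul0r ee0 expr0.
by rewrite -natr1 mulrDl mul1r eeD IH exprSr.
Qed.
Lemma ee_norm x : `|ee x| = 1.
Proof.
apply/eqP; rewrite -sqrp_eq1 ?normr_ge0 // sqr_normc /ee.
simpc. rewrite -!expr2 cos2Dsin2 [sin x * _]mulrC addNr. by [].
Qed.
Lemma ee2pi : ee (pi *+ 2) = 1.
Proof. by rewrite /ee cos2pi sin2pi; simpc. Qed.
Lemma ee_neq1 x : 0 < x < pi *+ 2 -> ee x != 1.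
Proof.
move=> /andP[x0 x2]; apply/negP => /eqP E.
have : sin x = 0.
  by move: E; rewrite /ee; simpc; case.
have [xpi|pix] := ltP x pi.
  by move=> s0; have := sin_gt0_pi (x:=x); rewrite s0 ltxx x0 xpi; move/(_ isT).
rewrite le_eqVlt in pix; case/orP: pix => [/eqP pix|pix].
  move=> _; move: E; rewrite -pix /ee cospi sinpi; simpc; case=> /eqP.
  by rewrite -subr_eq0 -opprD oppr_eq0 (_ : (1 + 1 : R) = 2%:R) // pnatr_eq0.
move=> s0.
have h : 0 < sin (x - pi).
  by apply: sin_gt0_pi; rewrite subr_gt0 pix /= ltrBlDr -mulr2n.
have : sin x = - sin (x - pi) by rewrite -{1}(subrK pi x) sinDpi.
by rewrite s0 => /eqP; rewrite eq_sym oppr_eq0 (negbTE (lt0r_neq0 h)).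
Qed.
End Trig.
Arguments ee {R}.

Section Omega.
Variable R : realType.
Lemma omegaE L : omega R L = ee (2 * pi / L%:R).
Proof. by []. Qed.
Lemma omegaX L n : omega R L ^+ n = ee (n%:R * (2 * pi / L%:R)).
Proof. by rewrite eeMn. Qed.
Lemma omega_norm L : `|omega R L| = 1.
Proof. exact: ee_norm. Qed.
Lemma omegaL L : (0 < L)%N -> omega R L ^+ L = 1.
Proof.
move=> L0; rewrite omegaX mulrCA mulfV ?pnatr_eq0 -?lt0n // mulr1.
by rewrite mulr_natl ee2pi.
Qed.
Lemma omega_prim L n : (0 < n < L)%N -> omega R L ^+ n != 1.
Proof.
case/andP=> n0 nL; have L0 : (0 < L)%N by apply: leq_trans nL.
rewrite omegaX; apply: ee_neq1.
have Lr : (0 : R) < L%:R by rewrite ltr0n.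
rewrite mulrCA mulr_gt0 ?ltr0n //= ?mulr_gt0 ?divr_gt0 ?pi_gt0 //.
have y1 : n%:R / L%:R < 1 :> R by rewrite ltr_pdivrMr // mul1r ltr_nat.
have := pi_gt0 R; move: y1; set y := n%:R / L%:R; rewrite -mulr_natl; move=> *; nra.
by rewrite ltr0n.
by rewrite invr_gt0.
Qed.
Lemma omega_NK N K : (0 < N)%N -> (0 < K)%N -> omega R (N * K) ^+ N = omega R K.
Proof.
move=> N0 K0; rewrite omegaX omegaE natrM; congr ee.
by field; rewrite !pnatr_eq0 -!lt0n N0 K0.
Qed.
End Omega.


Section Unit.
Variable R : realType.
Implicit Types x : R[i].
Lemma normXz_unit x (z : int) : `|x| = 1 -> `|x ^ z| = 1.
Proof.
move=> x1; case: z => n; first by rewrite -exprnP normrX x1 expr1n.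
by rewrite NegzE -exprnN normfV normrX x1 expr1n invr1.
Qed.
Lemma conj_unit x : `|x| = 1 -> Num.conj x = x^-1.
Proof. by move=> x1; rewrite invC_norm x1 expr1n invr1 mul1r. Qed.
Lemma conjX_unit x n : `|x| = 1 -> Num.conj (x ^+ n) = x ^ (- n%:Z).
Proof. by move=> x1; rewrite conj_unit ?normrX ?x1 ?expr1n // exprnN. Qed.
Lemma unit_neq0 x : `|x| = 1 -> x != 0.
Proof. by move=> x1; rewrite -normr_eq0 x1 oner_eq0. Qed.

Lemma powz_eq1 x (K : nat) (z : int) : (0 < K)%N -> x ^+ K = 1 ->
  (forall n, (0 < n < K)%N -> x ^+ n != 1) -> x ^ z = 1 -> (K%:Z %| z)%Z.
Proof.
move=> K0 xK prim xz.
have x0 : x != 0.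
  apply/eqP => x0; move: xK; rewrite x0 expr0n gtn_eqF // => /eqP.
  by rewrite eq_sym oner_eq0.
have Kz : K%:Z != 0 by rewrite -lt0n K0.
move: xz; rewrite {1}(divz_eq z K) expfzDr // mulrC -exprz_exp exprzAC -exprnP xK exp1rz mulr1.
have Kp : 0 < K%:Z by rewrite ltz_nat.
move=> {}xz; apply/dvdz_mod0P; have := ltz_pmod z Kp; have := modz_ge0 z Kz; move: xz.
case: (z %% K)%Z => [[|r]|r] // xr _ rK.
have xr' : x ^+ r.+1 = 1 by exact: xr.
by have := prim r.+1; rewrite ltz_nat in rK; rewrite rK xr' eqxx => /(_ isT).
Qed.

Lemma geom0 x (K : nat) : x ^+ K = 1 -> x != 1 -> \sum_(0 <= t < K) x ^+ t = 0.
Proof.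
move=> xK x1; apply/eqP; have := subrX1 x K; rewrite xK subrr big_mkord => /esym/eqP.
by rewrite mulf_eq0 subr_eq0 (negbTE x1).
Qed.

Lemma geom_part x (K : nat) : (0 < K)%N -> x ^+ K = 1 -> x != 1 ->
  \sum_(0 <= t < K - 1) x ^+ t = - x ^+ (K - 1).
Proof.
move=> K0 xK x1; have := @geom0 x K xK x1.
rewrite -(subnK K0) addn1 big_nat_recr //= subn1 /= => /eqP.
by rewrite subn1 /= addr_eq0 => /eqP.
Qed.
Lemma conjcM (a b : R[i]) : Num.conj (a * b) = Num.conj a * Num.conj b.
Proof. exact: rmorphM. Qed.
Lemma conj_powz x (z : int) : `|x| = 1 -> Num.conj (x ^ z) = x ^ (- z).
Proof.
move=> x1; rewrite -exprz_inv -conj_unit //.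
case: z => n; first by rewrite -!exprnP rmorphXn.
by rewrite NegzE -!exprnN fmorphV rmorphXn.
Qed.
End Unit.


Lemma coprime_tau N tau : (0 < tau)%N -> (tau < pdiv N)%N -> coprime N tau.
Proof.
move=> t0 tp; rewrite /coprime.
have g0 : (0 < gcdn N tau)%N by rewrite gcdn_gt0 t0 orbT.
case: (ltngtP (gcdn N tau) 1) => // [|g1]; first by lia.
have := pdiv_min_dvd g1 (dvdn_gcdl N tau).
have := dvdn_leq t0 (dvdn_gcdr N tau); lia.
Qed.

Lemma dk_form N a2 a1 tau k : (0 < N)%N -> exists M : int,
  (fquad N a2 a1 k)%:Z - (fquad N a2 a1 ((k + tau) %% N))%:Z =
  - (2 * a2%:Z * tau%:Z * k%:Z + a2%:Z * tau%:Z ^+ 2 + a1%:Z * tau%:Z) + M * N%:Z.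
Proof.
move=> N0; rewrite /fquad.
set u := (k + tau)%N.
have Eu := divn_eq u N.
set kp := (u %% N)%N in Eu *.
set n1 := (a2 * k ^ 2 + a1 * k)%N.
set n2 := (a2 * kp ^ 2 + a1 * kp)%N.
have E1 := divn_eq n1 N; have E2 := divn_eq n2 N.
move: (n1 %/ N)%N (n1 %% N)%N (n2 %/ N)%N (n2 %% N)%N (u %/ N)%N E1 E2 Eu => q1 f1 q2 f2 r E1 E2 Eu.
have {}E1 : f1%:Z = n1%:Z - q1%:Z * N%:Z by rewrite E1 PoszD PoszM; ring.
have {}E2 : f2%:Z = n2%:Z - q2%:Z * N%:Z by rewrite E2 PoszD PoszM; ring.
have {}Eu : kp%:Z = u%:Z - r%:Z * N%:Z by rewrite Eu PoszD PoszM; ring.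
exists (- q1%:Z + q2%:Z - (a2%:Z * (N%:Z * r%:Z ^+ 2 - 2 * u%:Z * r%:Z) - a1%:Z * r%:Z)).
rewrite E1 E2 /n1 /n2 -!mulnn !PoszD !PoszM Eu /u PoszD; ring.
Qed.

Lemma small_mul (q : int) (K : nat) : (0 < K)%N -> - K%:Z < q * K%:Z < K%:Z -> q = 0.
Proof. move=> K0 /andP[h1 h2]; have : (0 < K%:Z) by rewrite ltz_nat. nia. Qed.

Lemma uniq_hit N K a2 a1 tau (v : int) k1 k2 :
  (2 < N)%N -> (N <= K)%N -> coprime a2 N -> odd N -> (0 < tau)%N -> (tau < pdiv N)%N ->
  let B := (if K == N then N%:Z else if (K < 2 * N - 1)%N then (K - N + 1)%:Z else K%:Z) in
  - B < v < B -> (k1 < N)%N -> (k2 < N)%N ->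
  (K%:Z %| (fquad N a2 a1 k1)%:Z - (fquad N a2 a1 ((k1 + tau) %% N))%:Z + v)%Z ->
  (K%:Z %| (fquad N a2 a1 k2)%:Z - (fquad N a2 a1 ((k2 + tau) %% N))%:Z + v)%Z ->
  k1 = k2.
Proof.
move=> N2 NK cop oddN t0 tp B hv k1N k2N /dvdzP[q1 e1] /dvdzP[q2 e2].
have N0 : (0 < N)%N by lia.
have [M1 E1] := dk_form N a2 a1 tau k1 N0.
have [M2 E2] := dk_form N a2 a1 tau k2 N0.
have f1 : (fquad N a2 a1 k1 < N)%N by rewrite ltn_pmod.
have f2 : (fquad N a2 a1 k2 < N)%N by rewrite ltn_pmod.
have f3 : (fquad N a2 a1 ((k1 + tau) %% N) < N)%N by rewrite ltn_pmod.
have f4 : (fquad N a2 a1 ((k2 + tau) %% N) < N)%N by rewrite ltn_pmod.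
move: e1 e2 E1 E2 f1 f2 f3 f4.
set x1 := fquad N a2 a1 k1; set y1 := fquad N a2 a1 _; set x2 := fquad N a2 a1 k2.
set y2 := fquad N a2 a1 ((k2 + tau) %% N).
move=> e1 e2 E1 E2 f1 f2 f3 f4.
have [q Hq] : exists q : int, (x1%:Z - y1%:Z) - (x2%:Z - y2%:Z) = q * N%:Z.
  move: hv; rewrite /B; case: eqP => [KN|KN].
    by move=> _; exists (q1 - q2); rewrite -KN; lia.
  case: ifP => [K2|K2] hv.
    have Kp : (0 < K)%N by lia.
    have z1 : q1 = 0 by apply: (@small_mul _ K Kp); rewrite -e1; lia.
    have z2 : q2 = 0 by apply: (@small_mul _ K Kp); rewrite -e2; lia.
    by exists 0; lia.
  have Kp : (0 < K)%N by lia.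
  have z : q1 - q2 = 0.
    by apply: (@small_mul _ K Kp); rewrite mulrBl -e1 -e2; lia.
  by exists 0; lia.
have H : ((N%:Z) %| (2 * a2 * tau)%N%:Z * (k1%:Z - k2%:Z))%Z.
  apply/dvdzP; exists (M1 - M2 - q); rewrite !PoszM; lia.
rewrite Gauss_dvdzr in H; last first.
  rewrite coprimezE !absz_nat coprimeMr coprimeMr coprimen2 oddN /=.
  by rewrite coprime_sym cop coprime_tau.
case/dvdzP: H => r Hr.
have : r = 0 by apply: (@small_mul _ N N0); rewrite -Hr; lia.
move=> r0; move: Hr; rewrite r0 mul0r; lia.
Qed.


Section Decomp.
Variables (R : realType) (N K a2 a1 : nat) (h : 'I_N -> nat -> R[i]).
Hypotheses (N0 : (0 < N)%N) (NK : (N <= K)%N)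
  (hu : forall i n, (n < N)%N -> `|h i n| = 1).
Local Notation s := (seq_s R N K a2 a1 h).
Local Notation W := (omega R (N * K)).
Local Notation w := (omega R K).
Local Notation f := (fquad N a2 a1).
Local Notation kp tau k := ((k + tau) %% N)%N.
Local Notation dl tau k := (N <= k + tau)%N.

Definition xx tau v k : R[i] := w ^ ((f k)%:Z - (f (kp tau k))%:Z + v).
Definition cc i j tau (v : int) k : R[i] :=
  h i k * (h j (kp tau k))^* * W ^ (v * k%:Z) * w ^ (- ((dl tau k) * f (kp tau k))%N%:Z).

Lemma K0 : (0 < K)%N. Proof. exact: leq_trans NK. Qed.
Lemma w0 : w != 0. Proof. by apply: unit_neq0; apply: omega_norm. Qed.
Lemma W0 : W != 0. Proof. by apply: unit_neq0; apply: omega_norm. Qed.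

Lemma div_dl k tau : (k < N)%N -> (tau < N)%N -> ((k + tau) %/ N)%N = dl tau k.
Proof.
move=> kN tN; case: leqP => H; last by rewrite divn_small.
rewrite -(subnKC H) -{1}(mul1n N) divnMDl // divn_small //; lia.
Qed.

Lemma term i j tau v k t : (k < N)%N -> (tau < N)%N ->
  s i (t * N + k)%N * (s j (t * N + k + tau)%N)^* * W ^ (v * (t * N + k)%N%:Z)
  = cc i j tau v k * xx tau v k ^+ t.
Proof.
move=> kN tN.
rewrite /seq_s /seq_a -addnA !modnMDl !divnMDl // (modn_small kN) (divn_small kN) addn0.
rewrite div_dl // conjcM conjX_unit ?omega_norm //.
have -> : W ^ (v * (t * N + k)%N%:Z) = W ^ (v * k%:Z) * w ^ (v * t%:Z).
  rewrite -(@omega_NK R N K N0 K0) exprnP exprz_exp -expfzDr ?W0 //; congr (_ ^ _).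
  by rewrite PoszD PoszM; ring.
rewrite /cc /xx exprnP exprnP exprz_exp.
set A := h i k; set B := Num.conj _; set C := W ^ _.
transitivity (A * B * C * (w ^ (t%:Z * (f k)%:Z) * w ^ (- (((t + dl tau k) * f ((k + tau) %% N))%N)%:Z) * w ^ (v * t%:Z))).
  rewrite !PoszM; ring.
transitivity (A * B * C * (w ^ (- ((dl tau k * f ((k + tau) %% N))%N)%:Z) * w ^ (((f k)%:Z - (f ((k + tau) %% N))%:Z + v) * t%:Z))); last by ring.
congr (_ * _); rewrite -!expfzDr ?w0 //; congr (_ ^ _).
rewrite !PoszM PoszD; ring.
Qed.
Lemma sum_split (G : nat -> R[i]) (n m : nat) :
  \sum_(0 <= x < n * m) G x = \sum_(0 <= t < m) \sum_(0 <= k < n) G (t * n + k)%N.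
Proof.
rewrite mulnC big_nat_mul; apply: eq_big_nat => t _.
rewrite -{1}[(t * n)%N]add0n big_addn mulSn addnK.
by apply: eq_bigr => k _; rewrite addnC.
Qed.

Lemma decomp i j tau v : (tau < N)%N ->
  aperAF R (N * K) (s i) (s j) tau v =
  \sum_(0 <= k < N) cc i j tau v k * \sum_(0 <= t < K - dl tau k) xx tau v k ^+ t.
Proof.
move=> tN; rewrite /aperAF absz_nat.
have -> : (N * K <= tau)%N = false.
  apply/negbTE; rewrite -ltnNge; apply: (leq_trans tN); rewrite leq_pmulr //; exact: K0.
rewrite (_ : (0 <= tau%:Z) = true) //.
rewrite (big_nat_widen 0 (N * K - tau) (N * K)) ?leq_subr // big_mkcond /=.
rewrite sum_split exchange_big_nat; apply: eq_big_nat => k /andP[_ kN].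
rewrite big_distrr /=.
have KK := K0.
case: (leqP N (k + tau)) => H /=.
  have K1 : K = (K - 1).+1 by lia.
  rewrite {1}K1 big_nat_recr //= ifF ?addr0; last by apply/negbTE; rewrite -leqNgt; nia.
  apply: eq_big_nat => t /andP[_ tK]; rewrite ifT; last by nia.
  by rewrite term.
rewrite subn0; apply: eq_big_nat => t /andP[_ tK]; rewrite ifT; last by nia.
by rewrite term.
Qed.

Lemma cc_norm i j tau v k : (k < N)%N -> `|cc i j tau v k| = 1.
Proof.
move=> kN; rewrite /cc !normrM hu // norm_conjC hu ?ltn_pmod //.
by rewrite !normXz_unit ?omega_norm // !mulr1.
Qed.

Lemma xxK tau v k : xx tau v k ^+ K = 1.
Proof. by rewrite /xx exprnP exprzAC -exprnP omegaL ?K0 // exp1rz. Qed.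

Lemma xx_norm tau v k : `|xx tau v k| = 1.
Proof. by rewrite /xx normXz_unit ?omega_norm. Qed.

Lemma perk i j tau v k : (k < N)%N ->
  `|cc i j tau v k * \sum_(0 <= t < K - dl tau k) xx tau v k ^+ t| <=
  (if xx tau v k == 1 then K%:R else 0) + (dl tau k)%:R.
Proof.
move=> kN; rewrite normrM cc_norm // mul1r.
case: eqP => [->|x1].
  under eq_bigr do rewrite expr1n.
  rewrite sumr_const_nat subn0 normr_nat -natrD ler_nat; lia.
move/eqP: x1 => x1; have KK := K0.
case: (dl tau k) => /=.
  by rewrite geom_part ?xxK // normrN normrX xx_norm expr1n add0r.
by rewrite subn0 geom0 ?xxK // normr0 addr0.
Qed.

Lemma sum_dl tau : (tau <= N)%N -> \sum_(0 <= k < N) ((dl tau k)%:R : R[i]) = tau%:R.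
Proof.
move=> tN; rewrite -natr_sum; congr (_%:R).
rewrite (big_cat_nat (n := N - tau)) ?leq_subr //= big1_seq; last first.
  by move=> k; rewrite mem_index_iota => /andP[_ kl]; apply/eqP; rewrite eqb0 -ltnNge; lia.
rewrite add0n (eq_big_nat _ _ (F2 := fun _ => 1%N)); last first.
  by move=> k /andP[k1 k2]; apply/eqP; rewrite eqb1; lia.
rewrite sum_nat_const_nat muln1; lia.
Qed.

Lemma hits_le (P : nat -> bool) :
  (forall k1 k2, (k1 < N)%N -> (k2 < N)%N -> P k1 -> P k2 -> k1 = k2) ->
  \sum_(0 <= k < N) (if P k then K%:R else 0 : R[i]) <= K%:R.
Proof.
move=> uP; rewrite big_mkord.
case: (boolP [exists k : 'I_N, P k]) => [/existsP[k0 Pk0]|].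
  rewrite (bigD1 k0) //= Pk0 big1 ?addr0 // => k /negbTE kk0.
  case: ifP => // Pk; move: kk0; rewrite (_ : k = k0) ?eqxx //.
  by apply: val_inj; apply: uP => //; apply: ltn_ord.
move=> /existsPn nP; rewrite big1 ?ler0n // => k _.
by rewrite (negbTE (nP k)).
Qed.

Lemma bound_pos i j tau v : (2 < N)%N -> coprime a2 N -> odd N ->
  (0 < tau)%N -> (tau < pdiv N)%N ->
  let B := (if K == N then N%:Z else if (K < 2 * N - 1)%N then (K - N + 1)%:Z else K%:Z) in
  - B < v < B ->
  `|aperAF R (N * K) (s i) (s j) tau v| <= (K + tau)%:R.
Proof.
move=> N2 cop oddN t0 tp B hv.
have tN : (tau < N)%N by apply: (leq_trans tp); apply: pdiv_leq.
rewrite decomp //. apply: le_trans (ler_norm_sum _ _ _) _. 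
apply: (le_trans (y := \sum_(0 <= k < N) ((if xx tau v k == 1 then K%:R else 0) + (dl tau k)%:R))).
  rewrite !big_mkord; apply: ler_sum => k _; apply: perk; exact: ltn_ord.
rewrite big_split sum_dl ?(ltnW tN) //. rewrite natrD lerD2r. apply: hits_le.
move=> k1 k2 k1N k2N /eqP h1 /eqP h2.
have KK := K0.
have d1 := @powz_eq1 R _ K _ KK (omegaL R K KK) (fun n hn => omega_prim R K n hn) h1.
have d2 := @powz_eq1 R _ K _ KK (omegaL R K KK) (fun n hn => omega_prim R K n hn) h2.
exact: (@uniq_hit N K a2 a1 tau v k1 k2 N2 NK cop oddN t0 tp hv k1N k2N d1 d2).
Qed.

Lemma zero_tau_v i j (v : int) : v != 0 -> - K%:Z < v < K%:Z ->
  aperAF R (N * K) (s i) (s j) 0 v = 0.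
Proof.
move=> v0 hv; rewrite decomp // big_nat big1 // => k /andP[_ kN].
have KK := K0.
rewrite addn0 leqNgt kN /= subn0 geom0 ?xxK ?mulr0 //.
rewrite /xx addn0 (modn_small kN) subrr add0r; apply/negP => /eqP h1.
have /dvdzP[q hq] := @powz_eq1 R _ K _ KK (omegaL R K KK) (fun n hn => omega_prim R K n hn) h1.
have q0 : q = 0 by apply: (@small_mul _ K KK); rewrite -hq.
by move: v0; rewrite hq q0 mul0r eqxx.
Qed.

Lemma zero_zero i j :
  aperAF R (N * K) (s i) (s j) 0 0 = K%:R * \sum_(0 <= k < N) h i k * Num.conj (h j k).
Proof.
rewrite decomp // big_distrr; apply: eq_big_nat => k /andP[_ kN].
have nk : (N <= k + 0)%N = false by rewrite addn0 leqNgt kN.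
rewrite nk subn0 /xx /cc nk addn0 (modn_small kN) subrr add0r expr0z.
under eq_bigr do rewrite expr1n.
rewrite sumr_const_nat subn0 mul0r expr0z !mulr1 /= mulr_natl mulr_natr.
by [].
Qed.
End Decomp.


Lemma shift_sum (R : realType) (F : nat -> R[i]) n L :
  \sum_(n <= t < L) F t = \sum_(0 <= t < L - n) F (t + n)%N.
Proof. by rewrite -{1}(add0n n) big_addn. Qed.

Lemma neg_sym (R : realType) L (a b : nat -> R[i]) (n : nat) (v : int) : (0 < n)%N ->
  `|aperAF R L a b (- n%:Z) v| = `|aperAF R L b a n (- v)|.
Proof.
move=> n0; rewrite /aperAF abszN absz_nat.
case: leqP => // nL.
rewrite (_ : (0 <= - n%:Z) = false); last by lia.
rewrite (_ : (0 <= n%:Z) = true) // shift_sum -[in RHS]norm_conjC rmorph_sum.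
set W := omega R L.
have W1 : `|W| = 1 by apply: omega_norm.
have -> : \sum_(0 <= t < L - n) a (t + n)%N * Num.conj (b (t + n - n)%N) * W ^ (v * (t + n)%N%:Z)
  = W ^ (v * n%:Z) * \sum_(0 <= t < L - n) Num.conj (b t * Num.conj (a (t + n)%N) * W ^ (- v * t%:Z)).
  rewrite big_distrr; apply: eq_bigr => t _.
  rewrite addnK !conjcM conjCK conj_powz // mulNr opprK PoszD mulrDr expfzDr ?unit_neq0 //.
  by rewrite /=; ring.
by rewrite normrM normXz_unit // mul1r.
Qed.


Theorem corollary2 (R : realType) (N K : nat) (a2 a1 : 'I_N)
  (h : 'I_N -> nat -> R[i]) :
  (2 < N)%N -> odd N -> (N <= K)%N -> coprime a2 N ->
  (forall (i : 'I_N) (n : nat), (n < N)%N -> `|h i n| = 1) ->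
  (forall (i j : 'I_N), i != j ->
     `|\sum_(0 <= n < N) h i n * (h j n)^*| <= 1) ->
  (forall (i j : 'I_N) (v : nat), i != j -> (v < N)%N ->
     `|\sum_(0 <= n < N) h i n * (h j n)^* * omega R N ^+ (n * v)| < N%:R) ->
  let p := pdiv N in
  LAZ_aperiodic R N (N * K) (seq_s R N K a2 a1 h)
    (open_box p%:Z
       (if K == N then N%:Z
        else if (K < 2 * N - 1)%N then (K - N + 1)%:Z
        else K%:Z))
    (K + p - 1)%:R.
Proof.
move=> N2 oddN NK cop hu hc _ p.
have N0 : (0 < N)%N by lia.
have pN : (p <= N)%N by apply: pdiv_leq.
have p1 : (1 < p)%N by apply: prime_gt1; apply: pdiv_prime; lia.
set B := (if K == N then _ else _).
have BK : B <= K%:Z.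
  by rewrite /B; case: eqP => [->|_]; [lia | case: ifP => _; lia].
have Hb : forall n : nat, (n < p)%N -> ((K + n)%:R : R[i]) <= (K + p - 1)%:R.
  by move=> n np; rewrite ler_nat; lia.
have main : forall (i j : 'I_N) (tau v : int), (- p%:Z < tau < p%:Z) -> (- B < v < B) ->
    (i != j) || (tau != 0) || (v != 0) ->
    `|aperAF R (N * K) (seq_s R N K a2 a1 h i) (seq_s R N K a2 a1 h j) tau v| <= (K + p - 1)%:R.
  move=> i j tau v; case: tau => n.
    case: n => [|n].
      move=> _ hv; have [v0|v0] := eqVneq v 0.
        rewrite v0.
        rewrite eqxx !orbF => ij.
        rewrite zero_zero // normrM normr_nat.
        apply: (le_trans (y := K%:R * 1)).
          by rewrite ler_pM2l ?ltr0n ?hc //; lia.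
        by rewrite mulr1 ler_nat; lia.
      by move=> _; rewrite zero_tau_v // ?normr0 ?ler0n //; lia.
    move=> /andP[_ hn] hv _.
    apply: le_trans (Hb n.+1 _); last by lia.
    by apply: (@bound_pos R N K a2 a1 h N0 NK hu i j n.+1 v N2 cop oddN).
  move=> /andP[hn _] hv _.
  rewrite NegzE neg_sym //.
  apply: le_trans (Hb n.+1 _); last by lia.
  apply: (@bound_pos R N K a2 a1 h N0 NK hu j i n.+1 (- v) N2 cop oddN) => //; first by lia.
  by rewrite /B; lia.
have conv : ((K + p - 1)%:R : R)%:C = (K + p - 1)%:R.
  by rewrite rmorph_nat.
split.
  move=> i tau v [ht hv] tv; rewrite conv; apply: main => //.
  by move: tv; rewrite xpair_eqE negb_and eqxx /=.
move=> i j tau v ij [ht hv]; rewrite conv; apply: main => //.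
by rewrite ij.
Qed.
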